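(* Fix real $C_1,C_2$ with $2C_1+C_2>0$ and fix $C_3\in(0,C_{3,crit})$. Then the period function $b\mapsto\mathfrak L(C_1,C_2,C_3,b)$ is strictly increasing on $(b_-(C_3),b_+(C_3))$.
   Context: Let $\alpha>0$ and real constants $C_1,C_2$ be given. Travelling wave profiles $\phi$ of the DGH equation satisfy, for real constants $b$ and $C_3$, (E1) $\alpha^2(\phi-C_1)\phi''+\frac12\alpha^2(\phi')^2+(C_1-C_2-\frac32\phi)\phi=b$, and the first integral (E2) $\alpha^2(\phi-C_1)(\phi')^2+(C_1-C_2)\phi^2-\phi^3-2b\phi+C_1(2b+C_1C_2)=C_3$. Let $C_{3,crit}=\frac1{27}(2C_1+C_2)^3$. For $C_3\in(0,C_{3,crit})$, let $\phi_1<\phi_2<\phi_3$ be the roots of $2(\phi-C_1)^2(\phi+\frac{C_2}2)=C_3$; they satisfy $-\frac{C_2}{2}<\phi_1<\frac{C_1-C_2}{3}<\phi_2<C_1<\phi_3$. Let $U(\phi)=-\frac12\phi^2-\frac12C_2\phi-\frac12C_1C_2-\frac{C_3}{2(\phi-C_1)}$, so that with $z=\xi/\alpha$ (E2) reads $b=\frac12(d\phi/dz)^2+U(\phi)$. Set $b_-(C_3)=U(\phi_2)$ and $b_+(C_3)=U(\phi_1)$. For $b\in(b_-(C_3),b_+(C_3))$, let $\phi_-<\phi_+$ be the two solutions of $U(\phi)=b$ with $\phi_1<\phi_-<\phi_2<\phi_+<C_1$. The period function (the $z$-period of the corresponding periodic orbit) is $$\mathfrak L(C_1,C_2,C_3,b)=2\int_{\phi_-}^{\phi_+}\frac{d\phi}{\sqrt{2(b-U(\phi))}}.$$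 *)

(* Defs.v *)
From Stdlib Require Import Reals.
From Coquelicot Require Import Coquelicot.
Open Scope R_scope.

Definition U (C1 C2 C3 phi : R) : R :=
  - / 2 * phi ^ 2 - / 2 * C2 * phi - / 2 * C1 * C2 - C3 / (2 * (phi - C1)).

Definition cubicP (C1 C2 phi : R) : R := 2 * (phi - C1) ^ 2 * (phi + C2 / 2).

Definition C3crit (C1 C2 : R) : R := / 27 * (2 * C1 + C2) ^ 3.

Definition period_integrand (C1 C2 C3 b phi : R) : R :=
  / sqrt (2 * (b - U C1 C2 C3 phi)).

Definition period (C1 C2 C3 b phim phip : R) : R :=
  2 * RInt_gen (period_integrand C1 C2 C3 b) (at_right phim) (at_left phip).

Definition turning_points (C1 C2 C3 phi1 phi2 b phim phip : R) : Prop :=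
  phi1 < phim < phi2 /\ phi2 < phip < C1 /\
  U C1 C2 C3 phim = b /\ U C1 C2 C3 phip = b.

(* Main.v *)
Require Import Defs.
From Stdlib Require Import Reals Lra Psatz.
From Coquelicot Require Import Coquelicot.
Open Scope R_scope.

Definition Fs (y : R) : R := sqrt (y / (1 - y)).

Lemma Fs_lt a b : 0 <= a -> a < b -> b < 1 -> Fs a < Fs b.
Proof.
  intros Ha Hab Hb. unfold Fs. apply sqrt_lt_1_alt. split.
  - apply Rdiv_le_0_compat; lra.
  - assert (E : b/(1-b) - a/(1-a) = (b-a)/((1-a)*(1-b))) by (field; lra).
    assert (0 < (b-a)/((1-a)*(1-b))) by (apply Rdiv_lt_0_compat; nra). lra.
Qed.

Lemma Fs_le a b : 0 <= a -> a <= b -> b < 1 -> Fs a <= Fs b.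
Proof.
  intros Ha Hab Hb. destruct (Req_dec a b) as [->|H]. lra.
  left. apply Fs_lt; lra.
Qed.

Lemma Fs_pos a : 0 < a -> a < 1 -> 0 < Fs a.
Proof. intros. unfold Fs. apply sqrt_lt_R0. apply Rdiv_lt_0_compat; lra. Qed.

Definition dFs (y : R) : R := Fs y / (2 * y * (1 - y)).

Lemma Fs_derive y : 0 < y < 1 -> is_derive Fs y (dFs y).
Proof.
  intros Hy. unfold Fs, dFs.
  assert (Hp : 0 < y / (1 - y)) by (apply Rdiv_lt_0_compat; lra).
  auto_derive.
  - repeat split; try lra. replace (y * / (1 + - y)) with (y/(1-y)) by (unfold Rdiv; ring_simplify; reflexivity). exact Hp.
  - replace (y * / (1 + - y)) with (y/(1-y)) by (unfold Rdiv; ring_simplify; reflexivity).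
    fold (Fs y).
    assert (Hs := sqrt_sqrt (y/(1-y)) (Rlt_le _ _ Hp)).
    assert (Hs0 := sqrt_lt_R0 _ Hp). unfold Fs in *.
    set (S := sqrt (y/(1-y))) in *.
    replace (S / (2*y*(1-y))) with ((S*S)/(2*S*y*(1-y))) by (field; repeat split; lra).
    rewrite Hs. field. repeat split; lra.
Qed.

Lemma Fs_comp_derive (g : R -> R) t dg : is_derive g t dg -> 0 < g t < 1 ->
  is_derive (fun t => Fs (g t)) t (dg * dFs (g t)).
Proof. intros H1 H2. apply (is_derive_comp Fs g); [apply Fs_derive; lra | exact H1]. Qed.

Definition G2 (s x1 x2 : R) : R :=
  Fs ((1-s)/2*x1 + (1+s)/2*x2) + Fs ((1+s)/2*x1 + (1-s)/2*x2).

Lemma G2_mono s x1 x2 x1' x2' : 0 < s < 1 -> 0 < x1 -> x1 <= x1' -> x2 <= x2' ->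
  x1 < x2 -> x1' < x2' -> x2' < 1 -> (x1 < x1' \/ x2 < x2') ->
  G2 s x1 x2 < G2 s x1' x2'.
Proof.
  intros Hs H1 H2 H3 H4 H5 H6 H7. unfold G2.
  apply Rplus_lt_compat; apply Fs_lt; destruct H7; nra.
Qed.

Lemma stepA s pi t1 t2 : 0 < s < 1 -> 0 < pi -> pi < t1 * t1 -> 0 < t1 -> t1 < t2 -> t2 < 1 ->
  G2 s (pi / t1) t1 < G2 s (pi / t2) t2.
Proof.
  intros Hs Hpi Ht1 Ht0 H12 Ht2.
  set (al := (1+s)/2). set (be := (1-s)/2).
  set (yp := fun t => be * (pi / t) + al * t).
  set (ym := fun t => al * (pi / t) + be * t).
  set (dk := fun t => dFs (yp t) * (al - be * (pi / (t*t))) + dFs (ym t) * (be - al * (pi/(t*t)))).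
  assert (Hdom : forall t, t1 <= t <= t2 -> 0 < yp t < t /\ 0 < ym t < t /\ 0 < pi/t < t).
  { intros t Ht. assert (0 < t) by lra.
    assert (Hq : 0 < pi / t) by (apply Rdiv_lt_0_compat; lra).
    assert (Hq2 : pi / t < t).
    { apply Rmult_lt_reg_r with t. lra. unfold Rdiv. rewrite Rmult_assoc, Rinv_l by lra. nra. }
    unfold yp, ym, al, be. repeat split; nra. }
  assert (Hder : forall t, t1 <= t <= t2 -> is_derive (fun t => G2 s (pi / t) t) t (dk t)).
  { intros t Ht. destruct (Hdom t Ht) as [[Hy1 Hy2] [[Hy3 Hy4] [Hq1 Hq2]]].
    assert (Hq : pi / (t*t) = (pi/t)/t) by (field; lra).
    unfold G2, dk. fold al be.
    replace (dFs (yp t) * (al - be * (pi / (t * t))) + dFs (ym t) * (be - al * (pi / (t * t))))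
      with ((al - be * (pi / (t * t))) * dFs (yp t) + (be - al * (pi / (t * t))) * dFs (ym t)) by ring.
    apply (is_derive_plus (fun t => Fs (be * (pi/t) + al * t)) (fun t => Fs (al*(pi/t) + be*t))).
    - apply Fs_comp_derive; [|fold (yp t); lra].
      auto_derive. lra. field. lra.
    - apply Fs_comp_derive; [|fold (ym t); lra].
      auto_derive. lra. field. lra. }
  assert (Hpos : forall t, t1 <= t <= t2 -> dk t > 0).
  { intros t Ht. destruct (Hdom t Ht) as [[Hy1 Hy2] [[Hy3 Hy4] [Hq1 Hq2]]].
    assert (Htp : 0 < t) by lra.
    set (mu := pi / (t*t)).
    assert (Hmu0 : 0 < mu) by (apply Rdiv_lt_0_compat; nra).
    assert (Hmu1 : mu < 1).
    { unfold mu. apply Rmult_lt_reg_r with (t*t). nra. unfold Rdiv. rewrite Rmult_assoc, Rinv_l by nra. nra. }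
    assert (Eyp : yp t = t * (al + be * mu)) by (unfold yp, mu; field; lra).
    assert (Eym : ym t = t * (be + al * mu)) by (unfold ym, mu; field; lra).
    assert (Hal : al = (1+s)/2) by reflexivity. assert (Hbe : be = (1-s)/2) by reflexivity.
    assert (Hab : al - be = s) by (unfold al, be; field).
    assert (Hge : ym t <= yp t).
    { rewrite Eyp, Eym. assert (0 <= t * (al - be) * (1 - mu)) by (rewrite Hab; apply Rmult_le_pos; nra).
      nra. }
    unfold dk. fold mu. unfold dFs.
    set (A := Fs (yp t)). set (B := Fs (ym t)).
    assert (HB : 0 < B) by (apply Fs_pos; lra).
    assert (HAB : B <= A) by (apply Fs_le; lra).
    set (cp := al - be * mu). set (cm := be - al * mu).
    assert (Hcp : 0 < cp) by (unfold cp; nra).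
    assert (HP : 0 < 2 * yp t * (1 - yp t)) by nra.
    assert (HQ : 0 < 2 * ym t * (1 - ym t)) by nra.
    destruct (Rle_or_lt 0 cm) as [Hcm|Hcm].
    - assert (0 < A / (2 * yp t * (1 - yp t)) * cp) by (apply Rmult_lt_0_compat; [apply Rdiv_lt_0_compat|]; lra).
      assert (0 <= B / (2 * ym t * (1 - ym t)) * cm) by (apply Rmult_le_pos; [apply Rdiv_le_0_compat|]; lra).
      lra.
    - assert (Hkey : cp * ym t > (- cm) * yp t).
      { rewrite Eyp, Eym. unfold cp, cm.
        assert (E : (al - be * mu) * (t * (be + al * mu)) - - (be - al * mu) * (t * (al + be * mu))
                    = t * (2 * al * be * (1 - mu * mu))) by ring.
        assert (0 < t * (2 * al * be * (1 - mu * mu))).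
        { apply Rmult_lt_0_compat. lra. assert (0 < al) by (unfold al; lra). assert (0 < be) by (unfold be; lra).
          assert (0 < 1 - mu * mu) by nra. repeat apply Rmult_lt_0_compat; lra. }
        lra. }
      assert (H1 : A * cp * (ym t * (1 - ym t)) > A * (- cm) * (yp t * (1 - ym t))).
      { assert (0 < A * (1 - ym t)) by nra. nra. }
      assert (H2 : A * (- cm) * (yp t * (1 - ym t)) >= B * (- cm) * (yp t * (1 - yp t))).
      { assert (0 < (- cm) * yp t) by nra.
        assert (A * (1 - ym t) >= B * (1 - yp t)) by nra. nra. }
      assert (E : A / (2 * yp t * (1 - yp t)) * cp + B / (2 * ym t * (1 - ym t)) * cm
                  = (A * cp * (ym t * (1 - ym t)) - B * (- cm) * (yp t * (1 - yp t)))
                     / (2 * yp t * (1 - yp t) * (ym t * (1 - ym t)))) by (field; lra).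
      rewrite E. apply Rdiv_lt_0_compat. lra. nra. }
  apply (incr_function_le (fun t => G2 s (pi / t) t) t1 t2 dk).
  - intros x Hx1 Hx2. apply Hder. simpl in *. lra.
  - intros x Hx1 Hx2. apply Hpos. simpl in *. lra.
  - simpl; lra.
  - exact H12.
  - simpl; lra.
Qed.

Lemma G2_core s x1 x2 x1' x2' : 0 < s < 1 -> 0 < x1 -> x1 < x2 -> 0 < x1' -> x1' < x2' -> x2' < 1 ->
  x2 < x2' -> x1 * x2 < x1' * x2' -> G2 s x1 x2 < G2 s x1' x2'.
Proof.
  intros Hs H1 H2 H3 H4 H5 H6 H7.
  destruct (Rle_or_lt x1 x1') as [Hle|Hlt].
  - apply G2_mono; try lra; right; lra.
  - set (pi := x1 * x2).
    assert (Hpi : 0 < pi) by (unfold pi; nra).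
    assert (E1 : pi / x2 = x1) by (unfold pi; field; lra).
    assert (HA : G2 s (pi / x2) x2 < G2 s (pi / x2') x2') by (apply stepA; try lra; unfold pi; nra).
    rewrite E1 in HA.
    assert (Hb1 : pi / x2' < x1').
    { apply Rmult_lt_reg_r with x2'. lra. unfold Rdiv. rewrite Rmult_assoc, Rinv_l by lra. unfold pi; lra. }
    assert (Hb0 : 0 < pi / x2') by (apply Rdiv_lt_0_compat; lra).
    assert (HB : G2 s (pi / x2') x2' < G2 s x1' x2') by (apply G2_mono; try lra; left; lra).
    lra.
Qed.

Definition sf (w : R) : R := 2 * w / (1 + w ^ 2).
Definition Kf (p q r w : R) : R :=
  2 / (1 + w ^ 2) * sqrt (((p+q)/2 + (q-p)/2 * sf w) / (r - ((p+q)/2 + (q-p)/2 * sf w))).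
Definition om (z : R) : R := z / (1 + sqrt (1 - z ^ 2)).

Lemma sf_bound w : -1 <= sf w <= 1.
Proof.
  unfold sf. assert (H : 0 < 1 + w^2) by nra.
  assert (E1 : 2 * w / (1 + w^2) + 1 = (w+1)^2 / (1 + w^2)) by (field; nra).
  assert (E2 : 1 - 2 * w / (1 + w^2) = (w-1)^2 / (1 + w^2)) by (field; nra).
  assert (0 <= (w+1)^2 / (1 + w^2)) by (apply Rdiv_le_0_compat; [apply pow2_ge_0 | lra]).
  assert (0 <= (w-1)^2 / (1 + w^2)) by (apply Rdiv_le_0_compat; [apply pow2_ge_0 | lra]).
  lra.
Qed.

Lemma Kf_derive p q r w : 0 < p < q -> q < r -> ex_derive (Kf p q r) w.
Proof.
  intros Hpq Hqr. unfold Kf.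
  assert (Hb := sf_bound w).
  assert (H1 : p <= (p+q)/2 + (q-p)/2 * sf w) by nra.
  assert (H2 : (p+q)/2 + (q-p)/2 * sf w <= q) by nra.
  assert (Hpos : 0 < ((p+q)/2 + (q-p)/2 * sf w) / (r - ((p+q)/2 + (q-p)/2 * sf w)))
    by (apply Rdiv_lt_0_compat; lra).
  unfold sf in *. auto_derive. repeat split; try nra.
  - assert (Hr : r - ((p+q)/2 + (q-p)/2 * (2 * w / (1 + w^2))) > 0) by lra.
    exact (Rgt_not_eq _ _ Hr).
  - exact Hpos.
Qed.

Lemma om_id z : -1 <= z <= 1 ->
  sf (om z) = z /\ 2 / (1 + (om z)^2) = 1 + sqrt (1 - z^2).
Proof.
  intros Hz. unfold sf, om.
  assert (H0 : 0 <= 1 - z^2) by nra.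
  assert (Hs := sqrt_sqrt _ H0). assert (Hp := sqrt_pos (1 - z^2)).
  set (S := sqrt (1 - z^2)) in *.
  assert (E : 1 + (z / (1 + S))^2 = 2 / (1 + S)).
  { field_simplify_eq; [|lra]. replace (z^2) with (1 - S*S) by lra. ring. }
  split.
  - rewrite E. field. lra.
  - rewrite E. field. lra.
Qed.

Lemma om_1 : om 1 = 1.
Proof. unfold om. replace (1 - 1^2) with 0 by ring. rewrite sqrt_0. field. Qed.
Lemma om_m1 : om (-1) = -1.
Proof. unfold om. replace (1 - (-1)^2) with 0 by ring. rewrite sqrt_0. field. Qed.

Lemma om_derive z : -1 < z < 1 ->
  is_derive om z (/ (sqrt (1 - z^2) * (1 + sqrt (1 - z^2)))).
Proof.
  intros Hz. unfold om.
  assert (H0 : 0 < 1 - z^2) by nra.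
  assert (Hs := sqrt_sqrt _ (Rlt_le _ _ H0)). assert (Hp := sqrt_lt_R0 _ H0).
  auto_derive; change (1 + - (z * (z * 1))) with (1 - z^2).
  - repeat split; lra.
  - set (S := sqrt (1 - z^2)) in *.
    field_simplify_eq; [|lra].
    replace (z^2) with (1 - S*S) by lra. ring.
Qed.

Lemma om_cont z : continuous om z.
Proof.
  unfold om.
  apply (continuous_mult (fun z => z) (fun z => / (1 + sqrt (1 - z^2)))).
  - apply continuous_id.
  - apply (continuous_comp (fun z => 1 + sqrt (1 - z^2)) Rinv).
    + apply (continuous_comp (fun z => 1 - z^2) (fun u => 1 + sqrt u)).
      * apply (ex_derive_continuous (K := R_AbsRing) (V := R_NormedModule) (fun z => 1 - z^2)). auto_derive. auto.
      * apply (continuous_plus (fun _ => 1) sqrt). apply continuous_const. apply continuous_sqrt.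
    + apply continuous_Rinv. assert (Hp := sqrt_pos (1 - z^2)). lra.
Qed.

Lemma Kf_cont p q r w : 0 < p < q -> q < r -> continuous (Kf p q r) w.
Proof.
  intros. apply (ex_derive_continuous (K := R_AbsRing) (V := R_NormedModule)).
  apply Kf_derive; auto.
Qed.

Lemma Kf_ex_RInt p q r a b : 0 < p < q -> q < r -> ex_RInt (Kf p q r) a b.
Proof. intros. apply (ex_RInt_continuous (V := R_CompleteNormedModule)). intros. apply Kf_cont; auto. Qed.

Lemma Hf_derive p q r w : 0 < p < q -> q < r ->
  is_derive (fun w => RInt (Kf p q r) 0 w) w (Kf p q r w).
Proof.
  intros. apply (is_derive_RInt (Kf p q r) (fun w => RInt (Kf p q r) 0 w) 0 w).
  - apply filter_forall. intros. apply (RInt_correct (V := R_CompleteNormedModule)). apply Kf_ex_RInt; auto.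
  - apply Kf_cont; auto.
Qed.

Definition Phi (p q r c x : R) : R :=
  - RInt (Kf p q r) 0 (om (((c - x) - (p+q)/2) / ((q-p)/2))).

Definition fexpr (p q r c x : R) : R :=
  / sqrt (((c-x)-p) * (q-(c-x)) * (r-(c-x)) / (c-x)).

Lemma Phi_derive p q r c x : 0 < p < q -> q < r -> c - q < x < c - p ->
  is_derive (Phi p q r c) x (fexpr p q r c x).
Proof.
  intros Hpq Hqr Hx.
  set (h := (q-p)/2). set (m := (p+q)/2).
  set (z := ((c - x) - m) / h).
  assert (Hh : 0 < h) by (unfold h; lra).
  assert (Hz : -1 < z < 1).
  { unfold z. split.
    - apply Rmult_lt_reg_r with h. lra. unfold Rdiv. rewrite Rmult_assoc, Rinv_l by lra. unfold h, m. lra.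
    - apply Rmult_lt_reg_r with h. lra. unfold Rdiv. rewrite Rmult_assoc, Rinv_l by lra. unfold h, m. lra. }
  assert (H0 : 0 < 1 - z^2) by nra.
  assert (Hs := sqrt_sqrt _ (Rlt_le _ _ H0)). assert (Hsp := sqrt_lt_R0 _ H0).
  set (S := sqrt (1 - z^2)) in *.
  assert (D : is_derive (Phi p q r c) x
     (- ((- / h * / (S * (1 + S))) * Kf p q r (om z)))).
  { unfold Phi. fold h m.
    apply (is_derive_opp (fun x => RInt (Kf p q r) 0 (om ((c - x - m) / h)))).
    apply (is_derive_comp (fun w => RInt (Kf p q r) 0 w) (fun x => om ((c - x - m) / h))).
    - apply Hf_derive; auto.
    - apply (is_derive_comp om (fun x => (c - x - m) / h)).
      + fold z. apply om_derive. exact Hz.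
      + auto_derive. lra. field. lra. }
  replace (fexpr p q r c x) with (- ((- / h * / (S * (1 + S))) * Kf p q r (om z))); [exact D|].
  destruct (om_id z ltac:(lra)) as [E1 E2]. fold S in E2.
  unfold Kf. rewrite E1, E2. fold m h.
  assert (Ey : m + h * z = c - x) by (unfold z; field; lra).
  rewrite Ey. unfold fexpr.
  set (y := c - x) in *.
  assert (Hy1 : p < y) by (unfold y; lra). assert (Hy2 : y < q) by (unfold y; lra).
  assert (Hpy : (y - p) * (q - y) = (h * S)^2).
  { assert (Ez : y = m + h * z) by lra. rewrite Ez.
    transitivity (h^2 * (S*S)); [rewrite Hs; unfold m, h; clearbody S z y; field | ring]. }
  replace ((y - p) * (q - y) * (r - y) / y) with ((h * S)^2 * ((r - y) / y))
    by (rewrite <- Hpy; field; lra).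
  assert (Hry : 0 < (r - y) / y) by (apply Rdiv_lt_0_compat; lra).
  rewrite sqrt_mult_alt by (apply pow2_ge_0).
  rewrite sqrt_pow2 by nra.
  replace (y / (r - y)) with (/ ((r - y) / y)) by (field; lra).
  rewrite sqrt_inv.
  assert (Hsq := sqrt_lt_R0 _ Hry).
  field. repeat split; lra.
Qed.

Lemma RInt_K_val p q r : 0 < p < q -> q < r ->
  RInt (Kf p q r) 0 1 - RInt (Kf p q r) 0 (-1) = RInt (Kf p q r) (-1) 1.
Proof.
  intros H1 H2.
  rewrite <- (RInt_Chasles (V := R_CompleteNormedModule) (Kf p q r) (-1) 0 1)
    by (apply Kf_ex_RInt; auto).
  rewrite <- (opp_RInt_swap (V := R_CompleteNormedModule) (Kf p q r) (-1) 0)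
    by (apply Kf_ex_RInt; auto).
  simpl. unfold plus, opp; simpl. ring.
Qed.

Lemma Phi_cont p q r c x : 0 < p < q -> q < r -> continuous (Phi p q r c) x.
Proof.
  intros H1 H2. unfold Phi.
  apply (continuous_opp (fun x => RInt (Kf p q r) 0 (om ((c - x - (p + q) / 2) / ((q - p) / 2))))).
  apply (continuous_comp (fun x => (c - x - (p + q) / 2) / ((q - p) / 2))
                         (fun z => RInt (Kf p q r) 0 (om z))).
  - apply (ex_derive_continuous (K := R_AbsRing) (V := R_NormedModule)). auto_derive. lra.
  - apply (continuous_comp om (fun w => RInt (Kf p q r) 0 w)).
    + apply om_cont.
    + apply (ex_derive_continuous (K := R_AbsRing) (V := R_NormedModule)).
      eexists. apply Hf_derive; auto.
Qed.

Lemma integral_repr (f : R -> R) (p q r c : R) : 0 < p < q -> q < r ->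
  (forall x, c - q < x < c - p -> f x = fexpr p q r c x) ->
  is_RInt_gen f (at_right (c - q)) (at_left (c - p)) (RInt (Kf p q r) (-1) 1).
Proof.
  intros H1 H2 Hf.
  assert (HQ : at_right (c - q) (fun u => c - q < u < c - p)).
  { unfold at_right, within. apply (locally_interval _ _ m_infty (c - p)); simpl; auto; try lra. }
  assert (HR : at_left (c - p) (fun u => c - q < u < c - p)).
  { unfold at_left, within. apply (locally_interval _ _ (c - q) p_infty); simpl; auto; try lra. }
  assert (HD : forall x, c - q < x < c - p -> Derive (Phi p q r c) x = fexpr p q r c x).
  { intros x Hx. apply is_derive_unique. apply Phi_derive; auto. }
  assert (Hcf : forall x, c - q < x < c - p -> continuous (fexpr p q r c) x).
  { intros x Hx. apply (ex_derive_continuous (K := R_AbsRing) (V := R_NormedModule)).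
    assert (Hpos : 0 < ((c-x)-p)*(q-(c-x))*(r-(c-x))/(c-x))
      by (apply Rdiv_lt_0_compat; [repeat apply Rmult_lt_0_compat|]; lra).
    assert (Hsq := sqrt_lt_R0 _ Hpos).
    unfold fexpr. auto_derive. split; [lra|]. split; [exact Hpos|]. split; [|exact I].
    exact (Rgt_not_eq _ _ Hsq). }
  assert (Hval : Phi p q r c (c - p) - Phi p q r c (c - q) = RInt (Kf p q r) (-1) 1).
  { unfold Phi.
    replace ((c - (c - p) - (p + q) / 2) / ((q - p) / 2)) with (-1) by (field; lra).
    replace ((c - (c - q) - (p + q) / 2) / ((q - p) / 2)) with 1 by (field; lra).
    rewrite om_1, om_m1. rewrite <- RInt_K_val by auto. ring. }
  rewrite <- Hval.
  apply (is_RInt_gen_ext (Derive (Phi p q r c))).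
  - apply (Filter_prod _ _ _ _ _ HQ HR).
    intros u v Hu Hv x Hx. simpl in Hx. rewrite HD. symmetry. apply Hf.
    + destruct Hx as [Hx1 Hx2]. split.
      * apply Rle_lt_trans with (Rmin u v); auto. apply Rmin_glb; lra.
      * apply Rlt_le_trans with (Rmax u v); auto. apply Rmax_lub; lra.
    + destruct Hx as [Hx1 Hx2]. split.
      * apply Rle_lt_trans with (Rmin u v); auto. apply Rmin_glb; lra.
      * apply Rlt_le_trans with (Rmax u v); auto. apply Rmax_lub; lra.
  - assert (Hmm : forall u v x, c - q < u < c - p -> c - q < v < c - p ->
              Rmin u v <= x <= Rmax u v -> c - q < x < c - p).
    { intros u v x Hu Hv [Hx1 Hx2]. split.
      - apply Rlt_le_trans with (Rmin u v); auto. apply Rmin_glb_lt; lra.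
      - apply Rle_lt_trans with (Rmax u v); auto. apply Rmax_lub_lt; lra. }
    apply is_RInt_gen_Derive.
    + apply (Filter_prod _ _ _ _ _ HQ HR).
      intros u v Hu Hv x Hx. simpl in Hx. eexists. apply Phi_derive; auto.
      apply (Hmm u v x Hu Hv Hx).
    + apply (Filter_prod _ _ _ _ _ HQ HR).
      intros u v Hu Hv x Hx. simpl in Hx. specialize (Hmm u v x Hu Hv Hx).
      apply (continuous_ext_loc _ (fexpr p q r c)).
      * apply (filter_imp (fun y => c - q < y < c - p)).
        -- intros y Hy. symmetry. apply HD. exact Hy.
        -- apply (locally_interval _ _ (c - q) (c - p)); simpl; auto; try lra.
      * apply Hcf. exact Hmm.
    + apply (filterlim_filter_le_1 (F := locally (c - q))).
      * apply filter_le_within.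
      * apply Phi_cont; auto.
    + apply (filterlim_filter_le_1 (F := locally (c - p))).
      * apply filter_le_within.
      * apply Phi_cont; auto.
Qed.

Lemma Kf_opp_cont p q r w : 0 < p < q -> q < r -> continuous (fun w => Kf p q r (- w)) w.
Proof.
  intros. apply (continuous_comp (fun w => - w) (Kf p q r)).
  - apply (ex_derive_continuous (K := R_AbsRing) (V := R_NormedModule)). auto_derive. auto.
  - apply Kf_cont; auto.
Qed.

Lemma RInt_sym p q r : 0 < p < q -> q < r ->
  RInt (Kf p q r) (-1) 1 = RInt (fun w => Kf p q r w + Kf p q r (- w)) 0 1.
Proof.
  intros H1 H2.
  assert (Ex1 : ex_RInt (Kf p q r) 0 1) by (apply Kf_ex_RInt; auto).
  assert (Ex2 : ex_RInt (fun w => Kf p q r (- w)) 0 1).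
  { apply (ex_RInt_continuous (V := R_CompleteNormedModule)). intros. apply Kf_opp_cont; auto. }
  rewrite (RInt_plus (V := R_CompleteNormedModule)) by auto.
  rewrite <- (RInt_Chasles (V := R_CompleteNormedModule) (Kf p q r) (-1) 0 1)
    by (apply Kf_ex_RInt; auto).
  assert (E : RInt (fun w => Kf p q r (- w)) 0 1 = RInt (Kf p q r) (-1) 0).
  { assert (E1 := RInt_comp_lin (V := R_CompleteNormedModule) (Kf p q r) (-1) 0 0 1).
    replace (-1 * 0 + 0) with 0 in E1 by ring.
    replace (-1 * 1 + 0) with (-1) in E1 by ring.
    rewrite <- (opp_RInt_swap (V := R_CompleteNormedModule) (Kf p q r) 0 (-1))
      by (apply Kf_ex_RInt; auto).
    rewrite <- E1 by (apply Kf_ex_RInt; auto).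
    rewrite <- (RInt_opp (V := R_CompleteNormedModule)).
    - apply RInt_ext. intros x _. unfold scal, opp; simpl. unfold mult; simpl.
      replace (-1 * x + 0) with (- x) by ring. ring.
    - apply (ex_RInt_continuous (V := R_CompleteNormedModule)). intros z _.
      apply (continuous_comp (fun w => -1 * w + 0) (fun u => scal (-1) (Kf p q r u))).
      + apply (ex_derive_continuous (K := R_AbsRing) (V := R_NormedModule)). auto_derive. auto.
      + apply (continuous_scal_r (-1) (Kf p q r)). apply Kf_cont; auto. }
  rewrite E. unfold plus; simpl. ring.
Qed.

Lemma Kf_pair p q r w : 0 < p < q -> q < r ->
  Kf p q r w + Kf p q r (- w) = 2 / (1 + w^2) * G2 (sf w) (p / r) (q / r).
Proof.
  intros H1 H2.
  assert (Hs := sf_bound w).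
  assert (Esf : sf (- w) = - sf w) by (unfold sf; field; nra).
  set (s := sf w) in *.
  unfold Kf, G2, Fs. rewrite Esf. fold s.
  replace ((- w)^2) with (w^2) by ring.
  assert (Hp1 : p <= (p+q)/2 + (q-p)/2 * s) by nra.
  assert (Hp2 : (p+q)/2 + (q-p)/2 * s <= q) by nra.
  assert (Hm1 : p <= (p+q)/2 + (q-p)/2 * - s) by nra.
  assert (Hm2 : (p+q)/2 + (q-p)/2 * - s <= q) by nra.
  replace (((1 - s) / 2 * (p / r) + (1 + s) / 2 * (q / r)) / (1 - ((1 - s) / 2 * (p / r) + (1 + s) / 2 * (q / r))))
    with (((p + q) / 2 + (q - p) / 2 * s) / (r - ((p + q) / 2 + (q - p) / 2 * s))) by (field; lra).
  replace (((1 + s) / 2 * (p / r) + (1 - s) / 2 * (q / r)) / (1 - ((1 + s) / 2 * (p / r) + (1 - s) / 2 * (q / r))))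
    with (((p + q) / 2 + (q - p) / 2 * - s) / (r - ((p + q) / 2 + (q - p) / 2 * - s))) by (field; lra).
  ring.
Qed.

Lemma compare p q r p' q' r' : 0 < p < q -> q < r -> 0 < p' < q' -> q' < r' ->
  q / r < q' / r' -> (p / r) * (q / r) < (p' / r') * (q' / r') ->
  RInt (Kf p q r) (-1) 1 < RInt (Kf p' q' r') (-1) 1.
Proof.
  intros H1 H2 H3 H4 H5 H6.
  rewrite (RInt_sym p q r), (RInt_sym p' q' r') by auto.
  apply RInt_lt; [lra | | |].
  - intros x _. apply (continuous_plus (Kf p' q' r') (fun w => Kf p' q' r' (- w))).
    apply Kf_cont; auto. apply Kf_opp_cont; auto.
  - intros x _. apply (continuous_plus (Kf p q r) (fun w => Kf p q r (- w))).
    apply Kf_cont; auto. apply Kf_opp_cont; auto.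
  - intros w Hw. rewrite !Kf_pair by auto.
    apply Rmult_lt_compat_l. apply Rdiv_lt_0_compat; nra.
    assert (Hs1 : 0 < sf w) by (unfold sf; apply Rdiv_lt_0_compat; nra).
    assert (Hs2 : sf w < 1).
    { assert (E2 : 1 - sf w = (w-1)^2 / (1 + w^2)) by (unfold sf; field; nra).
      assert (0 < (w-1)^2 / (1 + w^2)) by (apply Rdiv_lt_0_compat; nra). lra. }
    assert (Hr : 0 < r) by lra. assert (Hr' : 0 < r') by lra.
    apply G2_core.
    + lra.
    + apply Rdiv_lt_0_compat; lra.
    + apply Rmult_lt_reg_r with r. lra. unfold Rdiv. rewrite !Rmult_assoc, Rinv_l by lra. lra.
    + apply Rdiv_lt_0_compat; lra.
    + apply Rmult_lt_reg_r with r'. lra. unfold Rdiv. rewrite !Rmult_assoc, Rinv_l by lra. lra.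
    + apply Rmult_lt_reg_r with r'. lra. unfold Rdiv. rewrite !Rmult_assoc, Rinv_l by lra. lra.
    + exact H5.
    + exact H6.
Qed.

Lemma Uform C1 C2 C3 y : y <> 0 ->
  U C1 C2 C3 (C1 - y) = - y^2 / 2 + (C1 + C2/2) * y + C3 / (2 * y) - C1^2/2 - C1 * C2.
Proof. intros Hy. unfold U. field. split; [|lra]. intro H. apply Hy. lra. Qed.

Lemma factor C1 C2 C3 b p q : 0 < p < q -> U C1 C2 C3 (C1 - p) = b -> U C1 C2 C3 (C1 - q) = b ->
  p * q * (2*C1 + C2 - p - q) = C3 /\
  forall y, y <> 0 -> 2 * (b - U C1 C2 C3 (C1 - y)) = (y - p) * (y - q) * (y - (2*C1 + C2 - p - q)) / y.
Proof.
  intros Hpq Hp Hq.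
  set (a := C1 + C2/2). set (K := C1^2/2 + C1*C2).
  assert (Ep : C3 = 2*p*(b + p^2/2 - a*p + K)).
  { rewrite <- Hp. rewrite Uform by lra. unfold a, K. field. lra. }
  assert (Eq : C3 = 2*q*(b + q^2/2 - a*q + K)).
  { rewrite <- Hq. rewrite Uform by lra. unfold a, K. field. lra. }
  assert (HB0 : (p - q) * (p^2 + p*q + q^2 - 2*a*(p+q) + 2*b + 2*K) = 0).
  { transitivity (2*p*(b + p^2/2 - a*p + K) - 2*q*(b + q^2/2 - a*q + K)); [field | lra]. }
  apply Rmult_integral in HB0. destruct HB0 as [HB0|HB0]; [lra|].
  assert (Eb : b = (2*a*(p+q) - p^2 - p*q - q^2)/2 - K) by lra.
  assert (EC3 : C3 = p * q * (2*C1 + C2 - p - q)).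
  { rewrite Ep, Eb. unfold a. field. }
  split; [lra|].
  intros y Hy. rewrite Uform by exact Hy. rewrite EC3, Eb. unfold a, K. field. exact Hy.
Qed.

Lemma pos_mid a c y : 0 < y -> 0 < c -> 0 < a * c / y -> 0 < a.
Proof.
  intros Hy Hc H. unfold Rdiv in H.
  assert (0 < a * c) by (apply Rmult_lt_reg_r with (/ y); [apply Rinv_0_lt_compat; lra | lra]).
  apply Rmult_lt_reg_r with c; lra.
Qed.

Lemma sign_lemma A B Cc y : 0 < y -> 0 < A -> Cc < 0 ->
  0 < A * B * Cc / y -> B < 0.
Proof.
  intros Hy HA HC H. destruct (Rlt_or_le B 0) as [HB|HB]; auto.
  exfalso. assert (A * B * Cc <= 0).
  { assert (0 <= A * B) by (apply Rmult_le_pos; lra). nra. }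
  assert (A * B * Cc / y <= 0).
  { unfold Rdiv. assert (0 < / y) by (apply Rinv_0_lt_compat; lra). nra. }
  lra.
Qed.

Theorem theorem2 (C1 C2 C3 phi1 phi2 : R) :
  2 * C1 + C2 > 0 ->
  0 < C3 < C3crit C1 C2 ->
  (* phi1 < phi2 are the roots of the cubic lying below C1 *)
  phi1 < phi2 < C1 ->
  cubicP C1 C2 phi1 = C3 -> cubicP C1 C2 phi2 = C3 ->
  forall b b' phim phip phim' phip' : R,
    U C1 C2 C3 phi2 < b -> b < b' -> b' < U C1 C2 C3 phi1 ->
    turning_points C1 C2 C3 phi1 phi2 b phim phip ->
    turning_points C1 C2 C3 phi1 phi2 b' phim' phip' ->
    ex_RInt_gen (period_integrand C1 C2 C3 b) (at_right phim) (at_left phip) /\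
    ex_RInt_gen (period_integrand C1 C2 C3 b') (at_right phim') (at_left phip') /\
    period C1 C2 C3 b phim phip < period C1 C2 C3 b' phim' phip'.
Proof.
  intros HC HC3 Hphi _ _ b b' phim phip phim' phip' Hb2 Hbb Hb1 T T'.
  destruct T as [[Tm1 Tm2] [[Tp1 Tp2] [Um Up]]].
  destruct T' as [[Tm1' Tm2'] [[Tp1' Tp2'] [Um' Up']]].
  set (p := C1 - phip). set (q := C1 - phim). set (p' := C1 - phip'). set (q' := C1 - phim').
  set (y1 := C1 - phi1).
  assert (Hpq : 0 < p < q) by (unfold p, q; lra).
  assert (Hpq' : 0 < p' < q') by (unfold p', q'; lra).
  assert (Up2 : U C1 C2 C3 (C1 - p) = b) by (unfold p; replace (C1 - (C1 - phip)) with phip by ring; auto).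
  assert (Uq2 : U C1 C2 C3 (C1 - q) = b) by (unfold q; replace (C1 - (C1 - phim)) with phim by ring; auto).
  assert (Up2' : U C1 C2 C3 (C1 - p') = b') by (unfold p'; replace (C1 - (C1 - phip')) with phip' by ring; auto).
  assert (Uq2' : U C1 C2 C3 (C1 - q') = b') by (unfold q'; replace (C1 - (C1 - phim')) with phim' by ring; auto).
  destruct (factor C1 C2 C3 b p q Hpq Up2 Uq2) as [Hprod Hfac].
  destruct (factor C1 C2 C3 b' p' q' Hpq' Up2' Uq2') as [Hprod' Hfac'].
  set (r := 2*C1 + C2 - p - q) in *. set (r' := 2*C1 + C2 - p' - q') in *.
  assert (Hy1 : q < y1 /\ q' < y1) by (unfold q, q', y1; lra).
  assert (Uy1 : U C1 C2 C3 (C1 - y1) = U C1 C2 C3 phi1) by (unfold y1; f_equal; ring).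
  assert (Hr : y1 < r).
  { assert (H := Hfac y1 ltac:(lra)). rewrite Uy1 in H.
    assert (H0 : 0 < (y1 - p) * (y1 - q) * (r - y1) / y1).
    { replace ((y1 - p) * (y1 - q) * (r - y1) / y1) with (- ((y1 - p) * (y1 - q) * (y1 - r) / y1))
        by (field; lra). lra. }
    assert (0 < (y1 - p) * (y1 - q)) by (apply Rmult_lt_0_compat; lra).
    destruct (Rlt_or_le y1 r) as [Hl|Hl]; auto. exfalso.
    assert ((y1 - p) * (y1 - q) * (r - y1) <= 0) by nra.
    assert ((y1 - p) * (y1 - q) * (r - y1) / y1 <= 0).
    { unfold Rdiv. assert (0 < / y1) by (apply Rinv_0_lt_compat; lra). nra. }
    lra. }
  assert (Hr' : y1 < r').
  { assert (H := Hfac' y1 ltac:(lra)). rewrite Uy1 in H.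
    assert (H0 : 0 < (y1 - p') * (y1 - q') * (r' - y1) / y1).
    { replace ((y1 - p') * (y1 - q') * (r' - y1) / y1) with (- ((y1 - p') * (y1 - q') * (y1 - r') / y1))
        by (field; lra). lra. }
    assert (0 < (y1 - p') * (y1 - q')) by (apply Rmult_lt_0_compat; lra).
    destruct (Rlt_or_le y1 r') as [Hl|Hl]; auto. exfalso.
    assert ((y1 - p') * (y1 - q') * (r' - y1) <= 0) by nra.
    assert ((y1 - p') * (y1 - q') * (r' - y1) / y1 <= 0).
    { unfold Rdiv. assert (0 < / y1) by (apply Rinv_0_lt_compat; lra). nra. }
    lra. }
  assert (Hint : forall (bb pp qq rr : R), 0 < pp < qq -> qq < rr ->
            (forall y, y <> 0 -> 2 * (bb - U C1 C2 C3 (C1 - y)) = (y - pp) * (y - qq) * (y - rr) / y) ->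
            is_RInt_gen (period_integrand C1 C2 C3 bb) (at_right (C1 - qq)) (at_left (C1 - pp))
              (RInt (Kf pp qq rr) (-1) 1)).
  { intros bb pp qq rr H1 H2 H3. apply integral_repr; auto.
    intros x Hx. unfold period_integrand, fexpr. f_equal. f_equal.
    replace x with (C1 - (C1 - x)) at 1 by ring. rewrite H3 by lra. field. lra. }
  assert (I1 := Hint b p q r Hpq ltac:(lra) Hfac).
  assert (I2 := Hint b' p' q' r' Hpq' ltac:(lra) Hfac').
  replace (C1 - q) with phim in I1 by (unfold q; ring).
  replace (C1 - p) with phip in I1 by (unfold p; ring).
  replace (C1 - q') with phim' in I2 by (unfold q'; ring).
  replace (C1 - p') with phip' in I2 by (unfold p'; ring).
  split; [eexists; exact I1|]. split; [eexists; exact I2|].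
  unfold period. rewrite (is_RInt_gen_unique _ _ I1), (is_RInt_gen_unique _ _ I2).
  apply Rmult_lt_compat_l; [lra|].
  assert (Hqq : q < q').
  { assert (H := Hfac' q ltac:(lra)). rewrite Uq2 in H.
    assert (H0 : 0 < (q' - q) * ((q - p') * (r' - q)) / q).
    { replace ((q' - q) * ((q - p') * (r' - q)) / q) with ((q - p') * (q - q') * (q - r') / q)
        by (field; lra). lra. }
    assert (q - p' > 0) by (unfold q, p'; lra).
    apply pos_mid in H0; [lra|lra|]. apply Rmult_lt_0_compat; lra. }
  assert (Hpp : p' < p).
  { assert (H := Hfac' p ltac:(lra)). rewrite Up2 in H.
    assert (H0 : 0 < (p - p') * ((q' - p) * (r' - p)) / p).
    { replace ((p - p') * ((q' - p) * (r' - p)) / p) with ((p - p') * (p - q') * (p - r') / p)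
        by (field; lra). lra. }
    assert (q' - p > 0) by (unfold q', p; lra).
    apply pos_mid in H0; [lra|lra|]. apply Rmult_lt_0_compat; lra. }
  assert (Hrr : r' < r).
  { assert (H := Hfac' r ltac:(lra)).
    assert (Hb0 := Hfac r ltac:(lra)).
    replace ((r - p) * (r - q) * (r - r) / r) with 0 in Hb0 by (field; lra).
    assert (H0 : 0 < (r - r') * ((r - p') * (r - q')) / r).
    { replace ((r - r') * ((r - p') * (r - q')) / r) with ((r - p') * (r - q') * (r - r') / r)
        by (field; lra). lra. }
    apply pos_mid in H0; [lra|lra|]. apply Rmult_lt_0_compat; lra. }
  apply compare; try lra.
  - apply Rlt_le_trans with (q' / r).
    + unfold Rdiv. apply Rmult_lt_compat_r. apply Rinv_0_lt_compat; lra. lra.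
    + unfold Rdiv. apply Rmult_le_compat_l. lra. left. apply Rinv_lt_contravar. nra. lra.
  - assert (E1 : p / r * (q / r) = C3 / (r * r * r)) by (rewrite <- Hprod; field; lra).
    assert (E2 : p' / r' * (q' / r') = C3 / (r' * r' * r')) by (rewrite <- Hprod'; field; lra).
    rewrite E1, E2. unfold Rdiv. apply Rmult_lt_compat_l. lra.
    apply Rinv_lt_contravar.
    + assert (0 < r * r * r) by (repeat apply Rmult_lt_0_compat; lra).
      assert (0 < r' * r' * r') by (repeat apply Rmult_lt_0_compat; lra). nra.
    + assert (0 < r') by lra.
      assert (Hd : 0 < (r - r') * (r * r + r * r' + r' * r')) by (apply Rmult_lt_0_compat; nra).
      assert (Ed : r * r * r - r' * r' * r' = (r - r') * (r * r + r * r' + r' * r')) by ring.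
      lra.
Qed.
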